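(* Let $G=(V,E)$ be a classical graph with vertex set $V=[n]$ and let $f\colon V \to \mathbb{C}^d$ be an orthogonal representation of $G$. Then the completely positive map $\phi\colon M_n \to M_d$ defined by $\phi(X) = \sum_{i=1}^n |f(i)\rangle\langle e_i| X |e_i\rangle\langle f(i)|$ for all $X\in M_n$ is an orthogonal representation of the quantum graph $\mathcal{S}_G=\operatorname{span}\{|e_i\rangle\langle e_j| : i=j\text{ or } i \text{ adjacent to } j\}$.
   Context: $(|e_k\rangle)$ is the standard basis of $\mathbb{C}^n$. A classical orthogonal representation of $G$ is a map $f\colon V\to\mathbb{C}^d$ such that $f(i)\perp f(j)$ whenever $i\neq j$ and $i,j$ are not adjacent. Elements $a,b$ of a $C^*$-algebra are orthogonal, $a\perp b$, if $ab=ba=a^*b=ab^*=0$. For a quantum graph $\mathcal{S}\subseteq M_n$ (a subspace closed under adjoints containing $I_n$), a completely positive map $\phi\colon M_n\to M_d$ is an orthogonal representation of $\mathcal{S}$ if $\phi(A)\perp\phi(B)$ for all $A,B\in M_n$ with $A\mathcal{S}B=B\mathcal{S}A=A^*\mathcal{S}B=A\mathcal{S}B^*=\{0\}$. *)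

(* Defs.v *)
From HB Require Import structures.
From mathcomp Require Import all_boot all_order all_algebra.
Set Implicit Arguments. Unset Strict Implicit. Unset Printing Implicit Defensive.
Import Order.TTheory GRing.Theory Num.Theory.
Local Open Scope ring_scope.

(* Complex scalars: an arbitrary numeric algebraically closed field C
   (with conjugation Num.conj); the complex numbers are an instance. *)

Definition adjmx (C : numClosedFieldType) m n (A : 'M[C]_(m, n)) : 'M[C]_(n, m) :=
  (map_mx Num.conj A)^T.

Definition ket_e (C : numClosedFieldType) n (i : 'I_n) : 'cV[C]_n := delta_mx i 0.

Definition psd_mx (C : numClosedFieldType) m (A : 'M[C]_m) : Prop :=
  exists B : 'M[C]_m, A = adjmx B *m B.

Definition mx_orth (C : numClosedFieldType) d (a b : 'M[C]_d) : Prop :=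
  [/\ a *m b = 0, b *m a = 0, adjmx a *m b = 0 & a *m adjmx b = 0].

Definition mx_linear (C : numClosedFieldType) n d (phi : 'M[C]_n -> 'M[C]_d) : Prop :=
  forall (c : C) (X Y : 'M[C]_n), phi (c *: X + Y) = c *: phi X + phi Y.

(* complete positivity: for every k, id_k (x) phi maps positive elements of
   M_k(M_n) (k x k block matrices with n x n blocks) to positive elements of
   M_k(M_d). *)
Definition completely_positive (C : numClosedFieldType) n d
    (phi : 'M[C]_n -> 'M[C]_d) : Prop :=
  mx_linear phi /\
  forall (k : nat) (X : 'I_k -> 'I_k -> 'M[C]_n),
    psd_mx (@mxblock C k k (fun _ => n) (fun _ => n) X) ->
    psd_mx (@mxblock C k k (fun _ => d) (fun _ => d) (fun a b => phi (X a b))).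

Definition classical_orth_rep n d (C : numClosedFieldType) (adj : rel 'I_n)
    (f : 'I_n -> 'cV[C]_d) : Prop :=
  forall i j : 'I_n, i != j -> ~~ adj i j -> adjmx (f i) *m f j = 0.

(* the quantum graph S_G = span{ |e_i><e_j| : i = j or i ~ j }, as a
   subspace of M_n encoded (via mxvec) in the mxalgebra style *)
Definition SG (C : fieldType) n (adj : rel 'I_n) : 'A[C]_(n ^ 2, n) :=
  (\sum_(ij : 'I_n * 'I_n | (ij.1 == ij.2) || adj ij.1 ij.2)
      <<mxvec (delta_mx ij.1 ij.2 : 'M[C]_n)>>)%MS.

Definition qgraph_orth_rep (C : numClosedFieldType) n d (S : 'A[C]_(n ^ 2, n))
    (phi : 'M[C]_n -> 'M[C]_d) : Prop :=
  completely_positive phi /\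
  forall A B : 'M[C]_n,
    (forall X : 'M[C]_n, (X \in S)%MS ->
       [/\ A *m X *m B = 0, B *m X *m A = 0,
           adjmx A *m X *m B = 0 & A *m X *m adjmx B = 0]) ->
    mx_orth (phi A) (phi B).

(* Main.v *)
Require Import Defs.
From HB Require Import structures.
From mathcomp Require Import all_boot all_order all_algebra.
From Stdlib Require Import FunctionalExtensionality.
Import Order.TTheory GRing.Theory Num.Theory.
Local Open Scope ring_scope.
Set Implicit Arguments. Unset Strict Implicit.

Section A.
Variable C : numClosedFieldType.

Lemma adjmxM m n p (A : 'M[C]_(m, n)) (B : 'M[C]_(n, p)) :
  adjmx (A *m B) = adjmx B *m adjmx A.
Proof. by rewrite /adjmx map_mxM trmx_mul. Qed.

Lemma adjmxK m n (A : 'M[C]_(m, n)) : adjmx (adjmx A) = A.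
Proof. by apply/matrixP => i j; rewrite !mxE conjCK. Qed.

Lemma adjmxD m n (A B : 'M[C]_(m, n)) : adjmx (A + B) = adjmx A + adjmx B.
Proof. by apply/matrixP => i j; rewrite !mxE rmorphD. Qed.

Lemma adjmxZ m n a (A : 'M[C]_(m, n)) : adjmx (a *: A) = a^* *: adjmx A.
Proof. by apply/matrixP => i j; rewrite !mxE rmorphM. Qed.

Lemma adjmx0 m n : adjmx (0 : 'M[C]_(m, n)) = 0.
Proof. by apply/matrixP => i j; rewrite !mxE rmorph0. Qed.

Lemma adjmx_sum m n (I : finType) (F : I -> 'M[C]_(m, n)) :
  adjmx (\sum_i F i) = \sum_i adjmx (F i).
Proof.
apply/matrixP => i j; rewrite !mxE !summxE rmorph_sum.
by apply: eq_bigr => k _; rewrite !mxE.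
Qed.

Lemma adjmx_delta m n i j : adjmx (delta_mx i j : 'M[C]_(m, n)) = delta_mx j i.
Proof. by rewrite /adjmx map_delta_mx trmx_delta. Qed.

Lemma adjmx_tstar m n (A : 'M[C]_(m, n)) : adjmx A = map_mx Num.conj (A^T).
Proof. by apply/matrixP => i j; rewrite !mxE. Qed.


Lemma adjmx_pid m n r : adjmx (pid_mx r : 'M[C]_(m, n)) = pid_mx r.
Proof. apply/matrixP => i j; rewrite !mxE rmorph_nat; congr (_ %:R); rewrite eq_sym; by case: eqP => // ->. Qed.

Lemma gram_sq p m (M : 'M[C]_(p, m)) :
  exists B : 'M[C]_m, adjmx M *m M = adjmx B *m B.
Proof.
case: (leqP m p) => hmp.
  set N := adjmx M.
  have Qu := spectral.schmidt_unitarymx N hmp.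
  set Q := spectral.schmidt N in Qu *.
  have /submxP [X hX] : (N <= Q)%MS by apply: spectral.schmidt_sub.
  have QQ : Q *m adjmx Q = 1%:M.
    rewrite adjmx_tstar; move/spectral.unitarymxP: Qu => <-; by [].
  exists (Q *m M); rewrite adjmxM !mulmxA; congr (_ *m _).
  by rewrite -/N hX -(mulmxA X) QQ mulmx1.
exists (pid_mx p *m M); rewrite adjmxM !mulmxA -(mulmxA _ _ (pid_mx p)).
rewrite adjmx_pid mul_pid_mx minnn (minn_idPr (ltnW hmp)) pid_mx_1.
by rewrite mulmx1.
Qed.


Lemma psd0 m : psd_mx (0 : 'M[C]_m).
Proof. by exists 0; rewrite mulmx0. Qed.

Lemma adjmx_col m1 m2 n (A : 'M[C]_(m1, n)) (B : 'M[C]_(m2, n)) :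
  adjmx (col_mx A B) = row_mx (adjmx A) (adjmx B).
Proof. by rewrite /adjmx map_col_mx tr_col_mx. Qed.

Lemma psdD m (A B : 'M[C]_m) : psd_mx A -> psd_mx B -> psd_mx (A + B).
Proof.
move=> [B1 ->] [B2 ->].
have [B3 hB] := gram_sq (col_mx B1 B2).
by exists B3; rewrite -hB adjmx_col mul_row_col.
Qed.

Lemma psd_sum m (I : finType) (F : I -> 'M[C]_m) :
  (forall i, psd_mx (F i)) -> psd_mx (\sum_i F i).
Proof.
move=> hF; apply: (big_ind (fun A => psd_mx A)) => //; first exact: psd0.
exact: psdD.
Qed.

Lemma psd_conj m p (X : 'M[C]_m) (D : 'M[C]_(m, p)) :
  psd_mx X -> psd_mx (adjmx D *m X *m D).
Proof.
move=> [B ->]; have [B' hB] := gram_sq (B *m D).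
by exists B'; rewrite -hB adjmxM !mulmxA.
Qed.

Lemma adjmx_mxblock p q (p_ : 'I_p -> nat) (q_ : 'I_q -> nat)
  (B_ : forall i j, 'M[C]_(p_ i, q_ j)) :
  adjmx (\mxblock_(i, j) B_ i j) = \mxblock_(i, j) adjmx (B_ j i).
Proof. by apply/matrixP => i j; rewrite !mxE. Qed.


Lemma adjmx_if m n (b : bool) (W : 'M[C]_(m, n)) :
  adjmx (if b then W else 0) = if b then adjmx W else 0.
Proof. by case: b; rewrite ?adjmx0. Qed.

Lemma sum_delta_l k (a : 'I_k) p q r (U : 'M[C]_(p, q)) (V : 'I_k -> 'M[C]_(q, r)) :
  \sum_c (if c == a then U else 0) *m V c = U *m V a.
Proof.
rewrite (bigD1 a) //= eqxx big1 ?addr0 // => c hc.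
by rewrite (negbTE hc) mul0mx.
Qed.

Lemma sum_delta_r k (b : 'I_k) p q r (U : 'M[C]_(q, r)) (V : 'I_k -> 'M[C]_(p, q)) :
  \sum_c V c *m (if c == b then U else 0) = V b *m U.
Proof.
rewrite (bigD1 b) //= eqxx big1 ?addr0 // => c hc.
by rewrite (negbTE hc) mulmx0.
Qed.

Lemma block_sandwich k n d (W : 'M[C]_(n, d)) (X : 'I_k -> 'I_k -> 'M[C]_n) :
  let D := @mxblock C k k (fun _ => n) (fun _ => d)
             (fun a b => if a == b then W else 0) in
  @mxblock C k k (fun _ => d) (fun _ => d) (fun a b => adjmx W *m X a b *m W)
  = adjmx D *m @mxblock C k k (fun _ => n) (fun _ => n) X *m D.
Proof.
move=> D; rewrite /D adjmx_mxblock !mul_mxblock.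
apply: eq_mxblock => a b.
under eq_bigr do under eq_bigr do rewrite adjmx_if.
under eq_bigr do rewrite sum_delta_l.
by rewrite sum_delta_r.
Qed.

Lemma cp_sandwich n d (I : finType) (W : I -> 'M[C]_(n, d)) :
  completely_positive (fun Y => \sum_i adjmx (W i) *m Y *m W i).
Proof.
split.
  move=> c X Y; rewrite scaler_sumr -big_split /=; apply: eq_bigr => i _.
  by rewrite mulmxDr mulmxDl -scalemxAr !scalemxAl.
move=> k X hX.
rewrite mxblock_sum; apply: psd_sum => i.
rewrite block_sandwich; exact: psd_conj.
Qed.


Lemma sandwich_e n d (g : 'cV[C]_d) (i : 'I_n) (Y : 'M[C]_n) :
  (g *m adjmx (ket_e C i)) *m Y *m (ket_e C i *m adjmx g) =
  Y i i *: (g *m adjmx g).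
Proof.
rewrite /ket_e adjmx_delta !mulmxA -(mulmxA g) -rowE -(mulmxA _ _ (delta_mx i 0)).
rewrite -colE.
have -> : col i (row i Y) = (Y i i)%:M.
  by apply/matrixP => x y; rewrite !ord1 !mxE eqxx.
by rewrite mul_mx_scalar scalemxAl.
Qed.

Lemma sandwich_W n d (g : 'cV[C]_d) (i : 'I_n) (Y : 'M[C]_n) :
  (g *m adjmx (ket_e C i)) *m Y *m (ket_e C i *m adjmx g) =
  adjmx (ket_e C i *m adjmx g) *m Y *m (ket_e C i *m adjmx g).
Proof. by rewrite adjmxM adjmxK. Qed.

Lemma entry_delta n (A B : 'M[C]_n) i j :
  (A *m delta_mx i j *m B) i j = A i i * B j j.
Proof.
rewrite -(mul_delta_mx (0 : 'I_1)) !mulmxA -colE -mulmxA -rowE.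
by rewrite mxE big_ord1 !mxE.
Qed.

Lemma SG_delta n (adj : rel 'I_n) i j :
  (i == j) || adj i j -> (mxvec (delta_mx i j : 'M[C]_n) <= SG C adj)%MS.
Proof.
move=> h; rewrite /SG; apply: (sumsmx_sup (i, j)) => //.
by rewrite genmxE.
Qed.


Lemma orth_prod n d (adj : rel 'I_n) (f : 'I_n -> 'cV[C]_d)
  (hf : classical_orth_rep adj f) (a b : 'I_n -> C) :
  (forall i j, (i == j) || adj i j -> a i * b j = 0) ->
  (\sum_i a i *: (f i *m adjmx (f i))) *m (\sum_j b j *: (f j *m adjmx (f j))) = 0.
Proof.
move=> hab; rewrite mulmx_suml big1 // => i _.
rewrite mulmx_sumr big1 // => j _.
rewrite -scalemxAr -scalemxAl scalerA.
case h: ((i == j) || adj i j); first by rewrite mulrC hab ?scale0r.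
move/negbT: h; rewrite negb_or => /andP [hij hadj].
by rewrite mulmxA -(mulmxA (f i)) hf // mulmx0 mul0mx scaler0.
Qed.

End A.

Unset Implicit Arguments.
Set Strict Implicit.

Theorem proposition5p4 (C : numClosedFieldType) (n d : nat) (adj : rel 'I_n)
    (adj_sym : symmetric adj) (adj_irr : irreflexive adj)
    (f : 'I_n -> 'cV[C]_d) (hf : classical_orth_rep adj f) :
  qgraph_orth_rep (SG C adj)
    (fun X : 'M[C]_n =>
       \sum_(i < n) (f i *m adjmx (ket_e C i)) *m X *m (ket_e C i *m adjmx (f i))).
Proof.
split.
  have -> : (fun X : 'M[C]_n =>
       \sum_(i < n) (f i *m adjmx (ket_e C i)) *m X *m (ket_e C i *m adjmx (f i)))
     = (fun X => \sum_(i < n) adjmx (ket_e C i *m adjmx (f i)) *m X *m (ket_e C i *m adjmx (f i))).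
    by apply: functional_extensionality => X; apply: eq_bigr => i _; rewrite sandwich_W.
  exact: cp_sandwich.
move=> A B hAB.
have phiE : forall Y : 'M[C]_n,
   \sum_(i < n) (f i *m adjmx (ket_e C i)) *m Y *m (ket_e C i *m adjmx (f i))
   = \sum_i Y i i *: (f i *m adjmx (f i)).
  by move=> Y; apply: eq_bigr => i _; rewrite sandwich_e.
have phiA : forall Y : 'M[C]_n,
   adjmx (\sum_i Y i i *: (f i *m adjmx (f i)))
   = \sum_i (Y i i)^* *: (f i *m adjmx (f i)).
  by move=> Y; rewrite adjmx_sum; apply: eq_bigr => i _; rewrite adjmxZ adjmxM adjmxK.
have H : forall i j, (i == j) || adj i j ->
   [/\ A i i * B j j = 0, B i i * A j j = 0, (A i i)^* * B j j = 0
     & A i i * (B j j)^* = 0].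
  move=> i j hij; have [h1 h2 h3 h4] := hAB _ (@SG_delta C _ adj _ _ hij).
  split.
  - by rewrite -entry_delta h1 mxE.
  - by rewrite -entry_delta h2 mxE.
  - by have := entry_delta (adjmx A) B i j; rewrite h3 !mxE => <-.
  - by have := entry_delta A (adjmx B) i j; rewrite h4 !mxE => <-.
rewrite /mx_orth !phiE !phiA; split; apply: (orth_prod hf) => i j /H; by case.
Qed.
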